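(* Let $L\ge2$, $N\ge d_x$, and assume $X_\epsilon$ has rank $d_x$, $p\ge\mathrm{rank}\big(YX_\epsilon^T(X_\epsilon X_\epsilon^T)^{-1}\big)$, and the teacher interpolates the clean data: $\tilde W_{L:1}X=Y$. Then every global minimizer $(W_L^{base},\dots,W_1^{base})$ of $\mathcal L_{base}$ and every global minimizer $(W_L^{st},\dots,W_1^{st})$ of $\mathcal L_{st}$ satisfy $$W_{L:1}^{base}=W_{L:1}^{st}=YX_\epsilon^T(X_\epsilon X_\epsilon^T)^{-1}.$$
   Context: Clean inputs $x_i\in\mathbb R^{d_x}$, targets $y_i\in\mathbb R^{d_y}$, noise $\epsilon_i\in\mathbb R^{d_x}$, $i=1,\dots,N$; $X\in\mathbb R^{d_x\times N}$ has columns $x_i$, $X_\epsilon$ has columns $x_i+\epsilon_i$, $Y\in\mathbb R^{d_y\times N}$ has columns $y_i$. A deep linear network with $L$ layers is a tuple $(W_L,\dots,W_1)$ with $W_i\in\mathbb R^{d_i\times d_{i-1}}$, $d_0=d_x$, $d_L=d_y$; $W_{i:j}:=W_iW_{i-1}\cdots W_j$; $p:=\min_{0\le i\le L}d_i$. Base loss: $\mathcal L_{base}(W_L,\dots,W_1)=\|W_{L:1}X_\epsilon-Y\|_F^2$. Fix $i^*\in\{1,\dots,L\}$, $\lambda>0$ and teacher weights $(\tilde W_L,\dots,\tilde W_1)$ of the same shapes; the student–teacher loss is $\mathcal L_{st}(W_L,\dots,W_1)=\|W_{L:1}X_\epsilon-Y\|_F^2+\lambda\|W_{i^*:1}X_\epsilon-\tilde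 W_{i^*:1}X\|_F^2$. *)

(* Defs.v *)
From HB Require Import structures.
From mathcomp Require Import all_boot all_order all_algebra.
Set Implicit Arguments. Unset Strict Implicit. Unset Printing Implicit Defensive.
Import Order.TTheory GRing.Theory Num.Theory.
Local Open Scope ring_scope.

Definition frob2 (R : nzRingType) (m n : nat) (A : 'M[R]_(m, n)) : R :=
  \sum_(i < m) \sum_(j < n) (A i j) ^+ 2.

(* A deep linear network with layer widths d : nat -> nat is a family
   W k : 'M_(d k.+1, d k); W k is the paper's W_{k+1}. Only k < L matters. *)
Definition weights (R : nzRingType) (d : nat -> nat) :=
  forall k : nat, 'M[R]_(d k.+1, d k).

(* wprod W j = W_{j:1} = W_j ... W_1  (wprod W 0 = identity). *)
Fixpoint wprod (R : nzRingType) (d : nat -> nat) (W : weights R d) (j : nat)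
  : 'M[R]_(d j, d 0) :=
  match j with
  | 0 => 1%:M
  | j'.+1 => W j' *m wprod W j'
  end.

Definition min_width (d : nat -> nat) (L : nat) : nat :=
  \big[minn/d 0]_(i < L.+1) d i.

Definition loss_base (R : nzRingType) (d : nat -> nat) (L N : nat)
  (Xe : 'M[R]_(d 0, N)) (Y : 'M[R]_(d L, N)) (W : weights R d) : R :=
  frob2 (wprod W L *m Xe - Y).

Definition loss_st (R : nzRingType) (d : nat -> nat) (L N istar : nat)
  (lambda : R) (X Xe : 'M[R]_(d 0, N)) (Y : 'M[R]_(d L, N))
  (Wt : weights R d) (W : weights R d) : R :=
  frob2 (wprod W L *m Xe - Y)
  + lambda * frob2 (wprod W istar *m Xe - wprod Wt istar *m X).

(* Main.v *)
Require Import Defs.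
From HB Require Import structures.
From mathcomp Require Import all_boot all_order all_algebra.
From mathcomp Require Import lra.
Import Order.TTheory GRing.Theory Num.Theory.
Local Open Scope ring_scope.

Section S.
Variable R : realFieldType.

Lemma frob2_tr m n (B : 'M[R]_(m, n)) : frob2 B = \tr (B *m B^T).
Proof.
rewrite /frob2 /mxtrace; apply: eq_bigr => i _; rewrite !mxE.
by apply: eq_bigr => j _; rewrite !mxE expr2.
Qed.

Lemma frob2_ge0 m n (B : 'M[R]_(m, n)) : 0 <= frob2 B.
Proof. by apply: sumr_ge0 => i _; apply: sumr_ge0 => j _; apply: sqr_ge0. Qed.

Lemma frob2_eq0 m n (B : 'M[R]_(m, n)) : frob2 B = 0 -> B = 0.
Proof.
move=> /eqP; rewrite psumr_eq0; last by move=> i _; apply: sumr_ge0 => j _; apply: sqr_ge0.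
move=> /allP H; apply/matrixP => i j; rewrite mxE.
have /implyP := H i (mem_index_enum _); move=> /(_ isT).
rewrite psumr_eq0; last by move=> k _; apply: sqr_ge0.
move=> /allP/(_ j (mem_index_enum _))/implyP/(_ isT).
by rewrite sqrf_eq0 => /eqP.
Qed.

Lemma frob2D_orth m n (B C : 'M[R]_(m, n)) : B *m C^T = 0 ->
  frob2 (B + C) = frob2 B + frob2 C.
Proof.
move=> BC; rewrite !frob2_tr linearD mulmxDl !mulmxDr BC.
have -> : C *m B^T = 0 by rewrite -(trmxK (C *m B^T)) trmx_mul trmxK BC trmx0.
by rewrite addr0 add0r mxtraceD.
Qed.


Lemma unitA n0 N (Xe : 'M[R]_(n0, N)) : row_free Xe -> Xe *m Xe^T \in unitmx.
Proof.
move=> fX; rewrite -row_free_unit; apply: inj_row_free => v vA.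
have : frob2 (v *m Xe) = 0.
  by rewrite frob2_tr trmx_mul mulmxA -(mulmxA v) vA mul0mx mxtrace0.
move=> /frob2_eq0 /eqP; rewrite mulmx_free_eq0 //; exact/eqP.
Qed.

Lemma decomp p n0 N (Xe : 'M[R]_(n0, N)) (M : 'M[R]_(p, n0)) (Z : 'M[R]_(p, N)) :
  Xe *m Xe^T \in unitmx ->
  frob2 (M *m Xe - Z) =
  frob2 ((M - Z *m Xe^T *m invmx (Xe *m Xe^T)) *m Xe)
  + frob2 (Z *m Xe^T *m invmx (Xe *m Xe^T) *m Xe - Z).
Proof.
move=> uA; rewrite -frob2D_orth.
  by congr frob2; rewrite mulmxBl addrA subrK.
rewrite -mulmxA.
set Q := (Z *m Xe^T *m invmx (Xe *m Xe^T) *m Xe - Z).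
have -> : Xe *m Q^T = (Q *m Xe^T)^T by rewrite trmx_mul trmxK.
have HQ : Q *m Xe^T = 0.
  by rewrite /Q mulmxBl -!mulmxA mulVmx // mulmx1 subrr.
by rewrite HQ trmx0 mulmx0.
Qed.

Lemma sq_zero n0 N p (Xe : 'M[R]_(n0, N)) (D : 'M[R]_(p, n0)) :
  row_free Xe -> frob2 (D *m Xe) <= 0 -> D = 0.
Proof.
move=> fX H; have : frob2 (D *m Xe) = 0.
  by apply/eqP; rewrite eq_le H frob2_ge0.
by move=> /frob2_eq0 /eqP; rewrite mulmx_free_eq0 // => /eqP.
Qed.

Lemma frob20 m n : frob2 (0 : 'M[R]_(m, n)) = 0.
Proof. by rewrite frob2_tr mul0mx mxtrace0. Qed.

Lemma ineq (f1 f2 c1 c2 lam : R): 0 < lam -> 0<= f1 -> 0<=f2 -> f1 + c1 + lam*(f2+c2) <= 0 + c1 + lam*(0+c2) -> f1 <= 0.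
Proof. move=> h1 h2 h3 h4. have h5 : 0 <= lam * f2 by apply: mulr_ge0 => //; apply: ltW. rewrite !mulrDr in h4. lra. Qed.

End S.
Arguments unitA {R n0 N Xe}.
Arguments decomp {R p n0 N Xe} M Z.
Arguments sq_zero {R n0 N p Xe D}.

Definition W0 (R : realFieldType) (d : nat -> nat) (Wt : weights R d)
  (K : 'M[R]_(d 0, d 0)) : weights R d :=
  fun k => match k return 'M[R]_(d k.+1, d k) with
           | 0 => Wt 0%N *m K
           | k'.+1 => Wt k'.+1
           end.
Arguments W0 {R d}.

Lemma wprodW0 (R : realFieldType) (d : nat -> nat) (Wt : weights R d)
  (K : 'M[R]_(d 0, d 0)) j : wprod (W0 Wt K) j.+1 = wprod Wt j.+1 *m K.
Proof.
elim: j => [|j IH] /=; first by rewrite !mulmx1.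
by rewrite -/(wprod _ j.+1) IH mulmxA.
Qed.

Theorem theorem2 (R : realFieldType) (d : nat -> nat) (L N istar : nat)
  (lambda : R) (X E : 'M[R]_(d 0, N)) (Y : 'M[R]_(d L, N))
  (Wt : weights R d) :
  (2 <= L)%N ->
  (d 0 <= N)%N ->
  (1 <= istar <= L)%N ->
  0 < lambda ->
  \rank (X + E)%R = d 0 ->
  (\rank (Y *m (X + E)^T *m invmx ((X + E) *m (X + E)^T)) <= min_width d L)%N ->
  wprod Wt L *m X = Y ->
  (forall W : weights R d,
     (forall W' : weights R d,
        loss_base (X + E) Y W <= loss_base (X + E) Y W') ->
     wprod W L = Y *m (X + E)^T *m invmx ((X + E) *m (X + E)^T)) /\
  (forall W : weights R d,
     (forall W' : weights R d,
        loss_st istar lambda X (X + E) Y Wt W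
        <= loss_st istar lambda X (X + E) Y Wt W') ->
     wprod W L = Y *m (X + E)^T *m invmx ((X + E) *m (X + E)^T)).
Proof.
move=> L2 _ /andP[i1 iL] lam0 rk _ teach.
set Xe := X + E.
have fX : row_free Xe by rewrite /row_free rk.
have uA := unitA fX.
set K := X *m Xe^T *m invmx (Xe *m Xe^T).
have W0L : wprod (W0 Wt K) L = Y *m Xe^T *m invmx (Xe *m Xe^T).
  case: L Y teach L2 {iL} => [|L'] Y0 teach0 // _.
  by rewrite wprodW0 /K -teach0 !mulmxA.
have W0i : wprod (W0 Wt K) istar
    = (wprod Wt istar *m X) *m Xe^T *m invmx (Xe *m Xe^T).
  case: istar i1 {iL} => [|i] // _.
  by rewrite wprodW0 /K !mulmxA.
split=> W Hmin.
  have := Hmin (W0 Wt K); rewrite /loss_base (decomp (wprod W L) Y uA) (decomp (wprod (W0 Wt K) L) Y uA) W0L subrr mul0mx.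
  rewrite frob20 lerD2r => H.
  by apply/eqP; rewrite -subr_eq0; apply/eqP; apply: (sq_zero fX).
have := Hmin (W0 Wt K); rewrite /loss_st (decomp (wprod W L) Y uA) (decomp (wprod (W0 Wt K) L) Y uA)
  (decomp (wprod W istar) (wprod Wt istar *m X) uA)
  (decomp (wprod (W0 Wt K) istar) (wprod Wt istar *m X) uA) W0L W0i !subrr !mul0mx !frob20.
move=> /ineq H; apply/eqP; rewrite -subr_eq0; apply/eqP; apply: (sq_zero fX).
by apply: H; rewrite // frob2_ge0.
Qed.
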